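(* Let $(\ell_n)_{n\in\mathbb N}$, $(\sigma_{n,0})_{n\in\mathbb N}$, $(\sigma_{n,1})_{n\in\mathbb N}$, $(\sigma_{n,-1})_{n\in\mathbb N}$ be sequences of strictly positive real numbers and let $(\kappa_n)_{n\in\mathbb N}$ be a sequence of real numbers. Then for every $x_0\in\mathbb R$ there exists at least one $x_1>0$ such that the sequence $(x_n)_{n\in\mathbb N}$ determined by $$\ell_n = x_n\big(\sigma_{n,1}x_{n+1}+\sigma_{n,0}x_n+\sigma_{n,-1}x_{n-1}\big)+\kappa_n x_n,\qquad n\in\mathbb N,$$ is well defined and positive, i.e. $x_n>0$ for all $n\in\mathbb N$.
   Context: $\mathbb N=\{1,2,3,\dots\}$. Since $\sigma_{n,1}>0$, the displayed equation, given $x_{n-1}$ and $x_n\neq 0$, determines $x_{n+1}$ uniquely; thus the sequence is determined recursively by $x_0$ and $x_1$ as long as no term $x_n$ with $n\ge 1$ vanishes. *)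

(* Defs.v *)
From Stdlib Require Import Reals.

(* Main.v *)
Require Import Defs.
From Stdlib Require Import Reals.
From Stdlib Require Import Lra Lia Classical ClassicalEpsilon FunctionalExtensionality.
Open Scope R_scope.

Definition closedI (a b t : R) := Rmin a b <= t <= Rmax a b.
Definition openI (a b t : R) := Rmin a b < t < Rmax a b.

Ltac mm := unfold closedI, openI, Rmin, Rmax in *; repeat (destruct (Rle_dec _ _)); lra.

Lemma cont_eps f x eps : continuity_pt f x -> 0 < eps ->
  exists d, 0 < d /\ forall t, Rabs (t - x) < d -> Rabs (f t - f x) < eps.
Proof.
  intros H He. destruct (H eps He) as [d [Hd H']]. exists d; split; auto.
  intros t Ht. destruct (Req_dec t x) as [->|Hn].
  - rewrite Rminus_diag, Rabs_R0; auto.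
  - apply (H' t). split. split; [exact I|auto]. simpl; unfold R_dist; auto.
Qed.

Lemma cid x : continuity_pt (fun u => u) x.
Proof. exact (derivable_continuous_pt _ _ (derivable_pt_id x)). Qed.

Lemma nzA (f : R -> R) q p : q < p ->
  (forall t, q <= t <= p -> continuity_pt f t) -> 0 < f q -> f p < 0 ->
  exists r, q < r < p /\ f r = 0 /\ forall t, q <= t < r -> 0 < f t.
Proof.
  intros Hqp Hc Hq Hp.
  set (E := fun s => q <= s <= p /\ forall t, q <= t <= s -> 0 < f t).
  assert (HB : bound E) by (exists p; intros s [Hs _]; lra).
  assert (Eq : E q) by (split; [lra| intros t Ht; replace t with q by lra; auto]).
  destruct (completeness E HB (ex_intro _ q Eq)) as [r [Hub Hlub]].
  assert (Hqr : q <= r) by (apply Hub; exact Eq).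
  assert (Hrp : r <= p) by (apply Hlub; intros s [Hs _]; lra).
  assert (Key : forall t, q <= t < r -> 0 < f t).
  { intros t Ht. destruct (classic (exists s, E s /\ t < s)) as [[s [[_ Hs] Hts]]|Hn].
    - apply Hs; lra.
    - exfalso. assert (r <= t); [|lra]. apply Hlub. intros s Hs.
      destruct (Rle_dec s t); auto. exfalso; apply Hn; exists s; split; auto; lra. }
  assert (Hfr : f r = 0).
  { destruct (Rtotal_order (f r) 0) as [Hlt|[Heq|Hgt]]; auto; exfalso.
    - assert (Hq' : q < r) by (destruct (Req_dec q r); [subst; lra| lra]).
      destruct (cont_eps f r (- f r) (Hc r (conj Hqr Hrp))) as [d [Hd Hd']]; [lra|].
      set (t0 := Rmax q (r - d/2)).
      assert (Ht0 : q <= t0 < r) by (unfold t0, Rmax; destruct Rle_dec; lra).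
      assert (Ht0' : Rabs (t0 - r) < d) by (apply Rabs_def1; unfold t0, Rmax; destruct Rle_dec; lra).
      specialize (Key t0 Ht0). specialize (Hd' t0 Ht0'). apply Rabs_def2 in Hd'. lra.
    - assert (Hr' : r < p) by (destruct (Req_dec r p); [subst; lra| lra]).
      destruct (cont_eps f r (f r) (Hc r (conj Hqr Hrp))) as [d [Hd Hd']]; [lra|].
      set (s := Rmin (r + d/2) p).
      assert (Es : E s).
      { split. unfold s, Rmin; destruct Rle_dec; lra.
        intros t Ht. destruct (Rlt_le_dec t r). apply Key; lra.
        assert (Rabs (t - r) < d) by (apply Rabs_def1; unfold s, Rmin in Ht; destruct Rle_dec; lra).
        specialize (Hd' t H). apply Rabs_def2 in Hd'. lra. }
      specialize (Hub s Es). unfold s, Rmin in Hub; destruct Rle_dec in Hub; lra. }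
  exists r. split; [|split; auto].
  split. destruct (Req_dec q r); [subst; lra| lra]. destruct (Req_dec r p); [subst; lra| lra].
Qed.

Lemma nzB f q p : p < q -> (forall t, p <= t <= q -> continuity_pt f t) -> 0 < f q -> f p < 0 ->
  exists r, p < r < q /\ f r = 0 /\ forall t, r < t <= q -> 0 < f t.
Proof.
  intros Hpq Hc Hq Hp.
  destruct (nzA (fun t => f (- t)) (- q) (- p)) as [r [Hr [Hfr Hk]]].
  - lra.
  - intros t Ht. apply (continuity_pt_comp (fun x => - x) f t).
    + apply continuity_pt_opp, cid.
    + apply Hc; lra.
  - rewrite Ropp_involutive; auto.
  - rewrite Ropp_involutive; auto.
  - exists (- r). split; [lra|]. split; auto. intros t Ht. replace t with (- - t) by ring. apply Hk; lra.
Qed.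

Lemma nz f q p : q <> p -> (forall t, closedI q p t -> continuity_pt f t) -> 0 < f q -> f p < 0 ->
  exists r, openI q p r /\ f r = 0 /\ forall t, closedI q r t -> t <> r -> 0 < f t.
Proof.
  intros Hne Hc Hq Hp. destruct (Rlt_or_le q p) as [H|H].
  - destruct (nzA f q p H) as [r [Hr [Hf Hk]]]; auto.
    + intros t Ht; apply Hc; mm.
    + exists r; split; [mm|split; auto]. intros t Ht Htr; apply Hk; mm.
  - destruct (nzB f q p) as [r [Hr [Hf Hk]]]; auto.
    + lra.
    + intros t Ht; apply Hc; mm.
    + exists r; split; [mm|split; auto]. intros t Ht Htr; apply Hk; mm.
Qed.

Lemma cplus f g x : continuity_pt f x -> continuity_pt g x -> continuity_pt (fun u => f u + g u) x.
Proof. exact (continuity_pt_plus f g x). Qed.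
Lemma cminus f g x : continuity_pt f x -> continuity_pt g x -> continuity_pt (fun u => f u - g u) x.
Proof. exact (continuity_pt_minus f g x). Qed.
Lemma cmul f g x : continuity_pt f x -> continuity_pt g x -> continuity_pt (fun u => f u * g u) x.
Proof. exact (continuity_pt_mult f g x). Qed.
Lemma cdiv f g x : continuity_pt f x -> continuity_pt g x -> g x <> 0 -> continuity_pt (fun u => f u / g u) x.
Proof. exact (continuity_pt_div f g x). Qed.
Lemma cconst c x : continuity_pt (fun _ => c) x.
Proof. apply continuity_pt_const. intros a b; reflexivity. Qed.

Ltac cont := repeat first [apply cdiv | apply cminus | apply cplus | apply cmul | apply cconst | assumption].

Record data := mk { dl : nat -> R; ds0 : nat -> R; ds1 : nat -> R; dsm : nat -> R; dk : nat -> R; dx0 : R }.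

Definition Hyp (D : data) := forall n, (1 <= n)%nat ->
  0 < dl D n /\ 0 < ds0 D n /\ 0 < ds1 D n /\ 0 < dsm D n.

Definition Fs (D : data) k a b := (dl D k / b - ds0 D k * b - dsm D k * a - dk D k) / ds1 D k.

Fixpoint XP (D : data) (t : R) (n : nat) : R * R :=
  match n with
  | O => (dx0 D, t)
  | S m => let p := XP D t m in (snd p, Fs D (S m) (fst p) (snd p))
  end.

Definition X D t n := fst (XP D t n).

Lemma XSS D t n : X D t (S (S n)) = Fs D (S n) (X D t n) (X D t (S n)).
Proof. unfold X. simpl. reflexivity. Qed.

Definition Q D j u := dl D (S j) - X D u (S j) * (ds0 D (S j) * X D u (S j) + dsm D (S j) * X D u j + dk D (S j)).

Lemma XQ D j u : X D u (S j) <> 0 -> ds1 D (S j) <> 0 ->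
  X D u (S (S j)) = Q D j u / (ds1 D (S j) * X D u (S j)).
Proof. intros H1 H2. rewrite XSS. unfold Fs, Q. field. auto. Qed.

Lemma Xcont D m t : Hyp D -> (forall k, (1 <= k <= m)%nat -> X D t k <> 0) ->
  continuity_pt (fun u => X D u m) t /\ continuity_pt (fun u => X D u (S m)) t.
Proof.
  intros HD. induction m as [|m IH]; intros H.
  - split. exact (cconst (dx0 D) t). exact (cid t).
  - destruct IH as [C1 C2]. { intros k Hk; apply H; lia. }
    split; auto.
    replace (fun u => X D u (S (S m))) with (fun u => Fs D (S m) (X D u m) (X D u (S m)))
      by (apply functional_extensionality; intros; rewrite XSS; auto).
    unfold Fs. destruct (HD (S m)) as [? [? [? ?]]]; [lia|].
    cont. apply H; lia. lra.
Qed.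

Lemma Qcont D j t : Hyp D -> continuity_pt (fun u => X D u j) t -> continuity_pt (fun u => X D u (S j)) t ->
  continuity_pt (Q D j) t.
Proof. intros HD C1 C2. unfold Q. cont. Qed.

Definition Inv D n e0 e1 := e0 <> e1 /\
 (forall t, closedI e0 e1 t -> forall k, (1 <= k <= n)%nat -> 0 < X D t k) /\
 X D e0 (S n) = 0 /\
 (forall t, closedI e0 e1 t -> t <> e0 -> 0 < X D t (S n)) /\
 (forall t, openI e0 e1 t -> 0 < X D t (S (S n))) /\
 X D e1 (S (S n)) = 0.

Lemma near e0 e1 d : e0 <> e1 -> 0 < d -> exists p, openI e0 e1 p /\ Rabs (p - e0) < d.
Proof.
  intros Hne Hd. destruct (Rlt_or_le e0 e1).
  - exists (e0 + Rmin (d/2) ((e1 - e0)/2)). split.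
    + unfold Rmin at 1; destruct Rle_dec; mm.
    + apply Rabs_def1; unfold Rmin; destruct Rle_dec; lra.
  - exists (e0 - Rmin (d/2) ((e0 - e1)/2)). split.
    + unfold Rmin at 1; destruct Rle_dec; mm.
    + apply Rabs_def1; unfold Rmin; destruct Rle_dec; lra.
Qed.

Lemma Sl1 a b : closedI a b a. Proof. mm. Qed.
Lemma Sl2 e0 e1 p r t : openI e0 e1 p -> openI e1 p r -> closedI e1 r t -> closedI e0 e1 t /\ t <> e0.
Proof. intros; split; [mm|]. intro; subst; mm. Qed.
Lemma Sl3 e0 e1 p r t : openI e0 e1 p -> openI e1 p r -> closedI e1 r t -> t <> e1 -> openI e0 e1 t.
Proof. intros H1 H2 H3 H4. assert (t < e1 \/ e1 < t) by lra. mm. Qed.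
Lemma Sl4 a b t : openI a b t -> closedI a b t /\ t <> b /\ t <> a.
Proof. intros; repeat split; try intro; try subst; mm. Qed.
Lemma Sl5 e1 p r : openI e1 p r -> e1 <> r.
Proof. intros H ?; subst; mm. Qed.
Lemma Sl6 e0 e1 p : openI e0 e1 p -> closedI e1 p p /\ p <> e0 /\ closedI e0 e1 p.
Proof. intros; repeat split; try intro; try subst; mm. Qed.
Lemma Sl7 e0 e1 p t : openI e0 e1 p -> closedI e1 p t -> closedI e0 e1 t /\ t <> e0.
Proof. intros; split; [mm|]. intro; subst; mm. Qed.

Lemma step D n e0 e1 : Hyp D -> Inv D n e0 e1 ->
  exists e2, Inv D (S n) e1 e2 /\ (forall t, closedI e1 e2 t -> closedI e0 e1 t).
Proof.
  intros HD [Hne [Hpos [H0 [Hn1 [Hn2 He1]]]]].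
  destruct (HD (S n)) as [hL [hS0 [hS1 hSm]]]; [lia|].
  destruct (HD (S (S n))) as [hL2 [hS02 [hS12 hSm2]]]; [lia|].
  set (L := dl D (S n)) in *. set (S0 := ds0 D (S n)) in *. set (Sm := dsm D (S n)) in *.
  set (K := dk D (S n)) in *. set (S1 := ds1 D (S n)) in *.
  set (L2 := dl D (S (S n))) in *. set (S02 := ds0 D (S (S n))) in *.
  set (Sm2 := dsm D (S (S n))) in *. set (K2 := dk D (S (S n))) in *.
  destruct (Xcont D n e0 HD) as [Cn Cn1].
  { intros k Hk. apply Rgt_not_eq, Hpos; auto. apply Sl1. }
  set (A := Rabs (X D e0 n) + 1).
  set (W := (Rabs K2 + L2) / S02 + 1).
  set (B := S1 * W + S0 + Sm * A + Rabs K).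
  assert (hW : 1 < W) by (unfold W; assert (0 < (Rabs K2 + L2)/S02) by (apply Rdiv_lt_0_compat; pose proof (Rabs_pos K2); lra); lra).
  assert (hA : 1 <= A) by (unfold A; pose proof (Rabs_pos (X D e0 n)); lra).
  assert (hB : 0 < B).
  { unfold B. pose proof (Rabs_pos K). assert (0 < S1 * W) by (apply Rmult_lt_0_compat; lra).
    assert (0 < Sm * A) by (apply Rmult_lt_0_compat; lra). lra. }
  set (eps := Rmin 1 (L / B)).
  assert (heps : 0 < eps) by (unfold eps, Rmin; destruct Rle_dec; [lra| apply Rdiv_lt_0_compat; lra]).
  destruct (cont_eps _ _ eps Cn1 heps) as [d1 [hd1 Hd1]].
  destruct (cont_eps _ _ 1 Cn Rlt_0_1) as [d2 [hd2 Hd2]].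
  destruct (near e0 e1 (Rmin d1 d2) Hne) as [p [Hp Hpd]].
  { unfold Rmin; destruct Rle_dec; lra. }
  destruct (Sl6 _ _ _ Hp) as [Hpp [Hpe0 Hpc]].
  assert (hy : 0 < X D p (S n)) by (apply Hn1; auto).
  set (y := X D p (S n)) in *.
  assert (hy2 : y < eps).
  { assert (Rabs (p - e0) < d1) by (unfold Rmin in Hpd; destruct Rle_dec in Hpd; lra).
    specialize (Hd1 p H). simpl in Hd1. rewrite H0 in Hd1. apply Rabs_def2 in Hd1. fold y in Hd1. lra. }
  assert (hz : X D p n < A).
  { assert (Rabs (p - e0) < d2) by (unfold Rmin in Hpd; destruct Rle_dec in Hpd; lra).
    specialize (Hd2 p H). simpl in Hd2. unfold A.
    pose proof (Rabs_triang_inv (X D p n) (X D e0 n)). pose proof (Rle_abs (X D p n)). lra. }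
  set (z := X D p n) in *.
  assert (hy1 : y < 1) by (unfold eps, Rmin in hy2; destruct Rle_dec in hy2; lra).
  assert (hyB : y < L / B) by (unfold eps, Rmin in hy2; destruct Rle_dec in hy2; lra).
  assert (hLy : B < L / y).
  { assert (y * B < L) by (replace L with (L / B * B) by (field; lra); nra).
    apply (Rmult_lt_reg_r y); auto. unfold Rdiv. rewrite Rmult_assoc, Rinv_l; lra. }
  assert (hw : W < X D p (S (S n))).
  { rewrite XSS. fold y z. unfold Fs. fold L S0 Sm K S1.
    apply (Rmult_lt_reg_l S1); auto.
    replace (S1 * ((L / y - S0 * y - Sm * z - K) / S1)) with (L / y - S0 * y - Sm * z - K) by (field; lra).
    unfold B in hLy. pose proof (Rle_abs K). pose proof (Rle_abs (-K)). rewrite Rabs_Ropp in *.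
    assert (S0 * y < S0) by nra. assert (Sm * z < Sm * A) by nra. lra. }
  set (w := X D p (S (S n))) in *.
  assert (hQp : Q D (S n) p < 0).
  { unfold Q. fold w y L2 S02 Sm2 K2.
    assert (S02 * (W - 1) = Rabs K2 + L2) by (unfold W; field; lra).
    pose proof (Rle_abs (-K2)). rewrite Rabs_Ropp in *.
    assert (S02 * w > Rabs K2 + L2 + S02) by nra.
    assert (S02 * w + Sm2 * y + K2 > L2 + S02) by nra.
    nra. }
  destruct (nz (Q D (S n)) e1 p) as [r [Hr [HQr HQpos]]].
  - intro; subst; mm.
  - intros t Ht. destruct (Sl7 _ _ _ _ Hp Ht) as [Ht1 Ht2].
    destruct (Xcont D (S n) t HD) as [C1 C2].
    { intros k Hk. apply Rgt_not_eq. destruct (Nat.eq_dec k (S n)) as [->|].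
      apply Hn1; auto. apply (Hpos t Ht1). lia. }
    apply Qcont; auto.
  - unfold Q. rewrite He1. fold L2. lra.
  - exact hQp.
  - exists r. split.
    + split; [exact (Sl5 _ _ _ Hr)|]. split.
      { intros t Ht k Hk. destruct (Sl2 _ _ _ _ _ Hp Hr Ht) as [Ht1 Ht2].
        destruct (Nat.eq_dec k (S n)) as [->|]. apply Hn1; auto. apply (Hpos t Ht1). lia. }
      split; [exact He1|]. split.
      { intros t Ht Hte. apply Hn2. exact (Sl3 _ _ _ _ _ Hp Hr Ht Hte). }
      split.
      { intros t Ht. destruct (Sl4 _ _ _ Ht) as [Ht1 [Ht2 Ht3]].
        assert (0 < X D t (S (S n))) by (apply Hn2; exact (Sl3 _ _ _ _ _ Hp Hr Ht1 Ht3)).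
        rewrite XQ; try lra. unfold Rdiv. apply Rmult_lt_0_compat. apply HQpos; auto.
        apply Rinv_0_lt_compat, Rmult_lt_0_compat; auto. }
      { assert (0 < X D r (S (S n))).
        { apply Hn2. apply (Sl3 _ _ _ _ _ Hp Hr). apply Sl4 in Hr; mm. intro; subst; mm. }
        rewrite XQ; try lra. rewrite HQr. unfold Rdiv; ring. }
    + intros t Ht. exact (proj1 (Sl2 _ _ _ _ _ Hp Hr Ht)).
Qed.

Lemma base D : Hyp D -> exists r, Inv D 0 0 r.
Proof.
  intros HD. destruct (HD 1%nat) as [hL [hS0 [hS1 hSm]]]; [lia|].
  set (L := dl D 1) in *. set (S0 := ds0 D 1) in *. set (b := dsm D 1 * dx0 D + dk D 1).
  set (P := 1 + (Rabs b + L) / S0).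
  assert (hP : 1 < P) by (unfold P; assert (0 < (Rabs b + L)/S0) by (apply Rdiv_lt_0_compat; pose proof (Rabs_pos b); lra); lra).
  assert (HQ : forall u, Q D 0 u = L - u * (S0 * u + b)).
  { intros u. unfold Q, L, S0, b. change (X D u 1) with u. change (X D u 0) with (dx0 D). ring. }
  destruct (nz (Q D 0) 0 P) as [r [Hr [HQr HQpos]]].
  - lra.
  - intros t _. destruct (Xcont D 0 t HD) as [C1 C2]. { intros; lia. }
    apply Qcont; auto.
  - rewrite HQ. lra.
  - rewrite HQ. assert (S0 * (P - 1) = Rabs b + L) by (unfold P; field; lra).
    pose proof (Rle_abs (-b)). rewrite Rabs_Ropp in *. nra.
  - assert (hr : 0 < r) by mm.
    exists r. split; [lra|]. split; [intros; lia|]. split; [reflexivity|]. split.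
    { intros t Ht Ht0. change (0 < t). mm. }
    split.
    { intros t Ht. destruct (Sl4 _ _ _ Ht) as [Ht1 [Ht2 Ht3]].
      assert (0 < X D t 1) by (change (0 < t); mm).
      rewrite XQ; try lra. unfold Rdiv. apply Rmult_lt_0_compat. apply HQpos; auto.
      apply Rinv_0_lt_compat, Rmult_lt_0_compat; auto. }
    { rewrite XQ. rewrite HQr. unfold Rdiv; ring. change (r <> 0); lra. lra. }
Qed.

Lemma nested (a b : nat -> R) :
  (forall n t, closedI (a (S n)) (b (S n)) t -> closedI (a n) (b n) t) ->
  exists c, forall n, closedI (a n) (b n) c.
Proof.
  intros H.
  set (m := fun n => Rmin (a n) (b n)). set (M := fun n => Rmax (a n) (b n)).
  assert (mM : forall n, m n <= M n) by (intros; unfold m, M; mm).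
  assert (s1 : forall n, m n <= m (S n) /\ M (S n) <= M n).
  { intros n. pose proof (H n (a (S n)) (Sl1 _ _)).
    assert (closedI (a (S n)) (b (S n)) (b (S n))) by mm.
    pose proof (H n _ H1). unfold m, M. unfold closedI in *. split.
    unfold Rmin at 2; destruct Rle_dec; lra. unfold Rmax at 1; destruct Rle_dec; lra. }
  assert (mon : forall n j, m n <= m (n + j)%nat /\ M (n + j)%nat <= M n).
  { intros n j; induction j. rewrite Nat.add_0_r; lra.
    rewrite Nat.add_succ_r. destruct (s1 (n + j)%nat). lra. }
  set (E := fun x => exists n, x = m n).
  assert (HB : bound E).
  { exists (M 0%nat). intros x [n ->]. destruct (mon 0%nat n). simpl in *. pose proof (mM n). lra. }
  destruct (completeness E HB (ex_intro _ (m 0%nat) (ex_intro _ 0%nat eq_refl))) as [c [Hub Hlub]].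
  exists c. intros n. split.
  - apply Hub. exists n; reflexivity.
  - apply Hlub. intros x [k ->]. destruct (mon k n) as [A1 A2]. destruct (mon n k) as [B1 B2].
    replace (n + k)%nat with (k + n)%nat in B2 by lia. pose proof (mM (k + n)%nat).
    unfold m, M in *. lra.
Qed.

Fixpoint seqI (g : nat -> R * R -> R) (s : R * R) (n : nat) : R * R :=
  match n with O => s | S m => let p := seqI g s m in (snd p, g m p) end.

Theorem theorem4p1 (l s0 s1 sm kappa : nat -> R)
  (hl : forall n : nat, (1 <= n)%nat -> 0 < l n)
  (hs0 : forall n : nat, (1 <= n)%nat -> 0 < s0 n)
  (hs1 : forall n : nat, (1 <= n)%nat -> 0 < s1 n)
  (hsm : forall n : nat, (1 <= n)%nat -> 0 < sm n)
  (x0 : R) :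
  exists x : nat -> R,
    x 0%nat = x0 /\
    (forall n : nat, (1 <= n)%nat -> 0 < x n) /\
    (forall n : nat, (1 <= n)%nat ->
       l n = x n * (s1 n * x (S n) + s0 n * x n + sm n * x (n - 1)%nat)
             + kappa n * x n).
Proof.
  set (D := mk l s0 s1 sm kappa x0).
  assert (HD : Hyp D) by (intros n Hn; simpl; auto).
  assert (G : forall n (ab : R * R), exists c,
     Inv D n (fst ab) (snd ab) -> Inv D (S n) (snd ab) c /\
       (forall t, closedI (snd ab) c t -> closedI (fst ab) (snd ab) t)).
  { intros n ab. destruct (classic (Inv D n (fst ab) (snd ab))) as [H|H].
    - destruct (step D n _ _ HD H) as [c Hc]. exists c; auto.
    - exists 0; tauto. }
  set (g := fun n ab => proj1_sig (constructive_indefinite_description _ (G n ab))).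
  assert (Hg : forall n ab, Inv D n (fst ab) (snd ab) -> Inv D (S n) (snd ab) (g n ab) /\
       (forall t, closedI (snd ab) (g n ab) t -> closedI (fst ab) (snd ab) t)).
  { intros n ab. unfold g. destruct (constructive_indefinite_description _ (G n ab)); auto. }
  destruct (base D HD) as [r0 Hr0].
  set (sq := seqI g (0, r0)).
  assert (HI : forall n, Inv D n (fst (sq n)) (snd (sq n))).
  { induction n. exact Hr0. simpl. apply (Hg n (sq n) IHn). }
  destruct (nested (fun n => fst (sq n)) (fun n => snd (sq n))) as [c Hc].
  { intros n t Ht. simpl in Ht. exact (proj2 (Hg n (sq n) (HI n)) t Ht). }
  exists (X D c). split; [reflexivity|].
  assert (Hp : forall n, (1 <= n)%nat -> 0 < X D c n).
  { intros n Hn. destruct (HI n) as [_ [H _]]. apply (H c (Hc n)). lia. }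
  split; auto.
  intros n Hn. destruct n as [|j]; [lia|].
  replace (S j - 1)%nat with j by lia.
  rewrite XSS. unfold Fs. simpl dl; simpl ds0; simpl ds1; simpl dsm; simpl dk.
  pose proof (Hp (S j) Hn). pose proof (hs1 (S j) Hn).
  field. split; lra.
Qed.
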